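(* For every partition $\lambda$ with at most $n$ parts, $$V^*_\lambda=\mathrm{Span}_{\mathbb{Q}(q,t)}\{E^*_\mu:\mu\in S_n(\lambda)\},$$ where $S_n(\lambda)$ is the set of rearrangements of $\lambda$.
   Context: Polynomials are in $x_1,\dots,x_n$ over $\mathbb{Q}(q,t)$; $\mathcal{P}_n^{(d)}$ denotes polynomials of degree at most $d$. For $\mu\in\mathbb{N}^n$ let $k_i(\mu)=\#\{j<i:\mu_j>\mu_i\}+\#\{j>i:\mu_j\ge\mu_i\}$ and $\widetilde\mu=(q^{\mu_1}t^{-k_1(\mu)},\dots,q^{\mu_n}t^{-k_n(\mu)})$. For $\mu\in\mathbb{N}^n$ with $|\mu|=d$, $E^*_\mu$ is the unique polynomial in $\mathcal{P}_n^{(d)}$ whose coefficient of $x^\mu$ is $1$ and with $E^*_\mu(\widetilde\nu)=0$ for all $\nu\in\mathbb{N}^n$, $|\nu|\le d$, $\nu\ne\mu$. For a partition $\lambda$ of size $d$, $V^*_\lambda=\{f\in\mathcal{P}_n^{(d)}: f(\widetilde\nu)=0 \text{ for all } \nu\in\mathbb{N}^n \text{ with } |\nu|\le|\lambda| \text{ and } \nu\notin S_n(\lambda)\}$. *)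

(* Defs.v *)
From HB Require Import structures.
From mathcomp Require Import all_boot all_order all_algebra all_fingroup.
From mathcomp Require Import fraction.
From mathcomp Require Import mpoly.
From Stdlib Require Import ClassicalEpsilon.
Set Implicit Arguments. Unset Strict Implicit. Unset Printing Implicit Defensive.
Import Order.TTheory GRing.Theory Num.Theory.
Local Open Scope ring_scope.

(* The field Q(q,t): fractions of bivariate polynomials {poly {poly rat}}.
   q is the inner variable, t the outer variable. *)
Definition Qqt : fieldType := {fraction {poly {poly rat}}}.
Definition qq : Qqt := FracField.tofrac (('X : {poly rat})%:P : {poly {poly rat}}).
Definition tt_ : Qqt := FracField.tofrac ('X : {poly {poly rat}}).

Definition wt (n : nat) (mu : 'X_{1..n}) : nat := mdeg mu.

Definition kk (n : nat) (mu : 'X_{1..n}) (i : 'I_n) : nat :=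
  (#|[set j : 'I_n | (j < i)%N && (mu i < mu j)%N]|
   + #|[set j : 'I_n | (i < j)%N && (mu i <= mu j)%N]|)%N.

Definition tilde (n : nat) (mu : 'X_{1..n}) : 'I_n -> Qqt :=
  fun i => qq ^+ (mu i) * tt_ ^- (kk mu i).

(* f in P_n^(d): total degree at most d (msize = 1 + degree, 0 for f = 0) *)
Definition degle (n : nat) (d : nat) (f : {mpoly Qqt[n]}) : Prop :=
  (msize f <= d.+1)%N.

Definition is_Estar (n : nat) (mu : 'X_{1..n}) (f : {mpoly Qqt[n]}) : Prop :=
  degle (wt mu) f /\ f@_mu = 1 /\
  (forall nu : 'X_{1..n}, (wt nu <= wt mu)%N -> nu <> mu -> f.@[tilde nu] = 0).

(* E*_mu: "the unique polynomial" with the above property (chosen by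
   classical choice; when it exists uniquely this is that polynomial). *)
Definition Estar (n : nat) (mu : 'X_{1..n}) : {mpoly Qqt[n]} :=
  epsilon (inhabits 0) (is_Estar mu).

Definition is_partition (n : nat) (lam : 'X_{1..n}) : Prop :=
  forall i j : 'I_n, (i <= j)%N -> (lam j <= lam i)%N.

Definition rearr (n : nat) (lam mu : 'X_{1..n}) : Prop :=
  exists s : 'S_n, forall i : 'I_n, mu i = lam (s i).

Definition Vstar (n : nat) (lam : 'X_{1..n}) (f : {mpoly Qqt[n]}) : Prop :=
  degle (wt lam) f /\
  (forall nu : 'X_{1..n}, (wt nu <= wt lam)%N -> ~ rearr lam nu ->
     f.@[tilde nu] = 0).

Definition permm (n : nat) (lam : 'X_{1..n}) (s : 'S_n) : 'X_{1..n} :=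
  [multinom lam (s i) | i < n].

(* Main.v *)
Require Import Defs.
From HB Require Import structures.
From mathcomp Require Import all_boot all_order all_algebra all_fingroup.
From mathcomp Require Import fraction mpoly.
From mathcomp Require Import zify ring.
From Stdlib Require Import ClassicalEpsilon.
Set Implicit Arguments. Unset Strict Implicit. Unset Printing Implicit Defensive.
Import GRing.Theory.
Local Open Scope ring_scope.

Definition F' (M : nat -> nat) (x y : nat) : nat :=
  (((y < x) && (M x < M y)) + ((x < y) && (M x <= M y)))%N.

Definition piN (j n' k : nat) : nat := if (k < j)%N then k else if (k < n')%N then k.+1 else j.

Lemma F_nat (j n' x y : nat) (N : nat -> nat) : (x <= n')%N -> (y <= n')%N -> (j <= n')%N ->
  (forall k, (k < j)%N -> N k = 0%N) -> (0 < N j)%N ->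
  F' (fun k => N (piN j n' k) - (piN j n' k == j))%N x y = F' N (piN j n' x) (piN j n' y).
Proof.
move=> xn yn jn Z P; rewrite /F' /piN.
have := Z x; have := Z y; have := Z x.+1; have := Z y.+1.
by repeat case: ifP => ?; lia.
Qed.

Lemma tt_neq0 : tt_ != 0.
Proof. by rewrite /tt_ tofrac_eq0 polyX_eq0. Qed.
Lemma qq_neq0 : qq != 0.
Proof. by rewrite /qq tofrac_eq0 polyC_eq0 polyX_eq0. Qed.

Lemma gen_div (F : fieldType) (x y : F) (b e : nat) : y != 0 ->
  x * y ^- b = y ^- e -> x * y ^+ e = y ^+ b.
Proof.
move=> y0 E.
have tb : y ^+ b != 0 by rewrite expf_neq0.
have te : y ^+ e != 0 by rewrite expf_neq0.
have := congr1 (fun z => z * y ^+ b * y ^+ e) E.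
by rewrite mulfVK // mulrAC mulVf // mul1r => ->.
Qed.

Lemma qt_neq (a b e : nat) : (0 < a)%N -> qq ^+ a * tt_ ^- b != tt_ ^- e.
Proof.
move=> a0; apply/negP => /eqP /(gen_div tt_neq0).
rewrite /qq /tt_ -!tofracXn -tofracM => /eqP; rewrite tofrac_eq => /eqP E3.
have := congr1 (fun p : {poly {poly rat}} => p`_e) E3.
rewrite -rmorphXn coefCM coefXn eqxx mulr1 coefXn.
have sz : size ('X^a : {poly rat}) = a.+1 by rewrite size_polyXn.
case: (e == b) => /= E4; move: sz; rewrite E4 ?size_poly1 ?size_poly0 //; lia.
Qed.

Section Gen.
Variable n : nat.
Local Notation R := Qqt.
Implicit Types (f g : {mpoly R[n]}).

Lemma msize_sum_le (I : Type) (r : seq I) (P : pred I) (F : I -> {mpoly R[n]}) k :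
  (forall i, P i -> (msize (F i) <= k)%N) -> (msize (\sum_(i <- r | P i) F i) <= k)%N.
Proof.
move=> H; elim/big_ind: _ => //; first by rewrite msize0.
by move=> x y Hx Hy; apply: leq_trans (msizeD_le _ _) _; rewrite geq_max Hx Hy.
Qed.

Lemma msizeZX (c : R) m k : (mdeg m < k)%N -> (msize (c *: 'X_[m] : {mpoly R[n]}) <= k)%N.
Proof. by move=> H; apply: leq_trans (msizeZ_le _ _) _; rewrite msizeX. Qed.

Lemma sum_msupp_eq (a : 'X_{1..n} -> R) f m :
  \sum_(m' <- msupp f) f@_m' * a m' * (m' == m)%:R = f@_m * a m.
Proof.
case: (boolP (m \in msupp f)) => Hm.
  rewrite (bigD1_seq m) //= ?msupp_uniq // eqxx mulr1 big1 ?addr0 // => i /negbTE ->.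
  by rewrite mulr0.
rewrite memN_msupp_eq0 // mul0r big_seq big1 // => i Hi.
have /negbTE -> : i != m by apply: contraNneq Hm => <-.
by rewrite mulr0.
Qed.

Lemma coef_sumX (I : eqType) (r : seq I) (a : I -> R) (phi : I -> 'X_{1..n}) mu :
  (\sum_(i <- r) a i *: 'X_[phi i] : {mpoly R[n]})@_mu = \sum_(i <- r) a i * (phi i == mu)%:R.
Proof. elim/big_rec2: _ => [|i x y _ IH]; last by rewrite mcoeffD mcoeffZ mcoeffX IH. exact: (mcoeff0 _ mu). Qed.

Lemma coef_of_eq0 f : (forall m, f@_m = 0) -> f = 0.
Proof. by move=> H; apply/mpolyP => m; rewrite H mcoeff0. Qed.

Definition setj (j : 'I_n) (m : 'X_{1..n}) : 'X_{1..n} :=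
  [multinom (if i == j then 0 else m i)%N | i < n].

Lemma setjE j (m : 'X_{1..n}) : m = (setj j m + U_(j) *+ m j)%MM.
Proof.
apply/mnmP => i; rewrite mnmDE mulmnE mnm1E mnmE.
by rewrite eq_sym; case: eqP => [->|_]; rewrite ?mul1n ?mul0n ?addn0.
Qed.

Lemma mdeg_setj j (m : 'X_{1..n}) : (mdeg (setj j m) + m j)%N = mdeg m.
Proof. by rewrite [in RHS](setjE j m) mdegD mdegMn mdeg1 mul1n. Qed.

Lemma setj_id j (m : 'X_{1..n}) : m j = 0%N -> setj j m = m.
Proof. by move=> H; apply/mnmP => i; rewrite mnmE; case: eqP => [->|]. Qed.

Definition rest j (c : R) f : {mpoly R[n]} :=
  \sum_(m <- msupp f) (f@_m * c ^+ m j) *: 'X_[setj j m].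
Definition quo j (c : R) f : {mpoly R[n]} :=
  \sum_(m <- msupp f) \sum_(l < m j)
     (f@_m * c ^+ l) *: 'X_[(setj j m + U_(j) *+ ((m j).-1 - l))%MM].

Lemma rest_quo j c f : f = rest j c f + ('X_j - c%:MP) * quo j c f.
Proof.
rewrite {1}(mpolyE f) /rest /quo mulr_sumr -big_split; apply: eq_bigr => m _ /=.
set s := setj j m.
have E1 : forall (a : R) k, a *: 'X_[(s + U_(j) *+ k)%MM] = 'X_[s] * ('X_j ^+ k * a%:MP) :> {mpoly R[n]}.
  by move=> a k; rewrite mpolyXD -mpolyXn -mul_mpolyC; ring.
under eq_bigr do rewrite -scalerA E1.
rewrite -scaler_sumr -scalerAr -scalerA.
have E2 : c ^+ m j *: 'X_[s] = 'X_[s] * (c%:MP ^+ m j) :> {mpoly R[n]}.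
  by rewrite -rmorphXn -mul_mpolyC mulrC.
rewrite E2 -mulr_sumr -scalerDr; congr (_ *: _).
under eq_bigr do rewrite rmorphXn.
rewrite mulrCA -subrXX {1}(setjE j m) mpolyXD -/s -mpolyXn; ring.
Qed.

Lemma rest_eval j c f (x : 'I_n -> R) : x j = c -> (rest j c f).@[x] = f.@[x].
Proof.
move=> xj; rewrite [in RHS](rest_quo j c f) mevalD mevalM mevalB mevalXU mevalC xj.
by rewrite subrr mul0r addr0.
Qed.

Definition zb (j : nat) (m : 'X_{1..n}) : bool := [forall i : 'I_n, (i < j)%N ==> (m i == 0%N)].
Definition zbp (j : nat) f := forall m, ~~ zb j m -> f@_m = 0.

Lemma zbP j (m : 'X_{1..n}) : reflect (forall i : 'I_n, (i < j)%N -> m i = 0%N) (zb j m).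
Proof.
apply: (iffP forallP) => H i; first by move=> Hi; move: (H i); rewrite Hi => /eqP.
by apply/implyP => /H ->.
Qed.

Lemma zbp_supp j f (m : 'X_{1..n}) : zbp j f -> m \in msupp f -> zb j m.
Proof.
move=> Hf Hm; case Hz: (zb j m) => //.
by move: Hm; rewrite mcoeff_msupp Hf ?Hz ?eqxx.
Qed.

Lemma rest_zbp (j : 'I_n) c f : zbp j f -> zbp j.+1 (rest j c f).
Proof.
move=> Hf mu Hmu; rewrite coef_sumX big_seq big1 // => m Hm.
case: eqP => [E|]; last by rewrite mulr0.
have /zbP Hz := zbp_supp Hf Hm.
exfalso; move/negP: Hmu; apply; apply/zbP => i Hi; rewrite -E mnmE; case: eqP => // ne.
apply: Hz; rewrite ltnS leq_eqVlt in Hi; case/orP: Hi => // /eqP/val_inj; done.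
Qed.

Lemma rest_coef_top (j : 'I_n) c f d mu : (msize f <= d.+1)%N -> mdeg mu = d -> mu j = 0%N ->
  (rest j c f)@_mu = f@_mu.
Proof.
move=> Hs Hd Hj; rewrite coef_sumX -[RHS]mulr1 -(sum_msupp_eq (fun=> 1)).
rewrite !big_seq; apply: eq_bigr => m Hm; rewrite mulr1.
have Hlt := msize_mdeg_lt Hm.
case: (eqVneq (setj j m) mu) => [E|ne].
  have Hmj : m j = 0%N by have := mdeg_setj j m; rewrite E; lia.
  by rewrite Hmj expr0 mulr1 -E setj_id // eqxx.
have -> : (m == mu) = false by apply/negP => /eqP E; move: ne; rewrite E setj_id ?eqxx.
by rewrite !mulr0.
Qed.


Lemma mcoeff_sum (I : Type) (r : seq I) (F : I -> {mpoly R[n]}) mu :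
  (\sum_(i <- r) F i)@_mu = \sum_(i <- r) (F i)@_mu.
Proof.
elim/big_rec2: _ => [|i x y _ IH]; last by rewrite mcoeffD IH.
exact: (mcoeff0 _ mu).
Qed.

Lemma quo_size (j : 'I_n) c f d : (msize f <= d.+1)%N -> (msize (quo j c f) <= d)%N.
Proof.
move=> Hs; rewrite /quo big_seq; apply: msize_sum_le => m Hm.
apply: msize_sum_le => l _; apply: msizeZX.
rewrite mdegD mdegMn mdeg1 mul1n.
have := mdeg_setj j m; have := msize_mdeg_lt Hm; have := ltn_ord l; lia.
Qed.

Lemma quo_zbp (j : 'I_n) c f : zbp j f -> zbp j (quo j c f).
Proof.
move=> Hf mu Hmu; rewrite /quo mcoeff_sum big_seq big1 // => m Hm.
rewrite mcoeff_sum big1 // => l _; rewrite mcoeffZ mcoeffX.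
case: eqP => [E|]; last by rewrite mulr0.
have /zbP Hz := zbp_supp Hf Hm.
exfalso; move/negP: Hmu; apply; apply/zbP => i Hi; rewrite -E mnmDE mulmnE mnm1E mnmE.
have ne : (i == j) = false by apply/negP => /eqP E'; move: Hi; rewrite E'; lia.
by rewrite ne eq_sym ne mul0n addn0 Hz.
Qed.

Lemma quo_coef_high (j : 'I_n) c f d mu : (msize f <= d.+1)%N -> (d <= mdeg mu)%N ->
  (quo j c f)@_mu = 0.
Proof.
move=> Hs Hd; apply: memN_msupp_eq0; apply: msize_mdeg_ge.
exact: leq_trans (quo_size j c Hs) Hd.
Qed.

Lemma f_coef_quo (j : 'I_n) c f d nu : rest j c f = 0 -> (msize f <= d.+1)%N ->
  mdeg nu = d -> (0 < nu j)%N -> f@_nu = (quo j c f)@_(nu - U_(j))%MM.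
Proof.
move=> Hr Hs Hd Hj.
have E : nu = (U_(j) + (nu - U_(j)))%MM by rewrite addmC submK // lep1mP; lia.
rewrite {1}(rest_quo j c f) Hr add0r mulrBl mcoeffB mcoeffCM.
rewrite (quo_coef_high _ _ Hs) ?Hd // mulr0 subr0.
by rewrite mulrC {1}E mcoeffMX.
Qed.


Lemma rest_size (j : 'I_n) c f : (msize (rest j c f) <= msize f)%N.
Proof.
rewrite /rest big_seq; apply: msize_sum_le => m Hm; apply: msizeZX.
have := mdeg_setj j m; have := msize_mdeg_lt Hm; lia.
Qed.

Lemma meval_sum (I : Type) (r : seq I) (F : I -> {mpoly R[n]}) x :
  (\sum_(i <- r) F i).@[x] = \sum_(i <- r) (F i).@[x].
Proof.
elim/big_rec2: _ => [|i y p _ IH]; last by rewrite mevalD IH.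
exact: meval0.
Qed.

End Gen.

Section Gen2.
Variable n : nat.
Local Notation R := Qqt.
Implicit Types (f g : {mpoly R[n]}).

Lemma cardsb (P : pred 'I_n) : #|[set l | P l]| = (\sum_l P l)%N.
Proof.
rewrite -sum1_card big_mkcond /=; apply: eq_bigr => l _; rewrite inE.
by case: (P l).
Qed.

Lemma kk_sum (mu : 'X_{1..n}) (i : 'I_n) : kk mu i =
  (\sum_(l < n) (((l < i) && (mu i < mu l)) + ((i < l) && (mu i <= mu l))))%N.
Proof. by rewrite /kk !cardsb -big_split. Qed.

Lemma kk_zero (mu : 'X_{1..n}) (i : 'I_n) : (forall l : 'I_n, (l <= i)%N -> mu l = 0%N) ->
  kk mu i = kk 0%MM i.
Proof.
move=> H; rewrite !kk_sum; apply: eq_bigr => l _; rewrite !mnm0E (H i (leqnn _)).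
case: (ltnP l i) => Hl /=; first by rewrite H ?(ltnW Hl).
by rewrite !leq0n.
Qed.

Lemma G_base d f : (msize f <= d.+1)%N -> zbp n f ->
  (forall nu, zb n nu -> (mdeg nu <= d)%N ->
     f.@[tilde nu] = 0 \/ (mdeg nu = d /\ f@_nu = 0)) -> f = 0.
Proof.
move=> Hs Hf H.
have z0 : zb n (0%MM : 'X_{1..n}) by apply/zbP => i _; rewrite mnm0E.
have Hc : f = (f@_0%MM)%:MP.
  apply/mpolyP => m; rewrite mcoeffC; case: (eqVneq m 0%MM) => [->|ne].
    by rewrite mulr1.
  rewrite mulr0; apply: Hf. apply/negP => /zbP Hz; move/eqP: ne; apply.
  by apply/mnmP => i; rewrite mnm0E Hz.
have H0 : f@_0%MM = 0.
  case: (H 0%MM z0); rewrite ?mdeg0 //; last by case.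
  by rewrite {1}Hc mevalC.
by apply/eqP; rewrite Hc H0 mpolyC_eq0.
Qed.
End Gen2.

Section Step.
Variable n' : nat.
Local Notation n := n'.+1.
Local Notation R := Qqt.
Variable j : 'I_n.
Implicit Types (f g : {mpoly R[n]}).

Definition pi (i : 'I_n) : 'I_n :=
  if (i < j)%N then i else if (i < n')%N then inord i.+1 else j.
Definition piinv (i : 'I_n) : 'I_n :=
  if (i < j)%N then i else if (nat_of_ord i == nat_of_ord j) then ord_max else inord i.-1.

Lemma pi_val i : nat_of_ord (pi i) = piN j n' i.
Proof.
rewrite /pi /piN; case: ifP => // _; case: ifP => // H.
by rewrite inordK // ltnS.
Qed.

Lemma piinv_val i : nat_of_ord (piinv i) =
  (if (i < j)%N then nat_of_ord i else if (nat_of_ord i == nat_of_ord j) then n' else (nat_of_ord i).-1).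
Proof.
rewrite /piinv; case: ifP => // _; case: ifP => // _.
by rewrite inordK //; have := ltn_ord i; lia.
Qed.

Lemma piK : cancel pi piinv.
Proof.
move=> i; apply: ord_inj; rewrite piinv_val !pi_val /piN.
have := ltn_ord i; have := ltn_ord j.
by case E1: (i < j)%N; case E2 : (i < n')%N => /=; repeat case: ifP => ?; lia.
Qed.

Lemma piinvK : cancel piinv pi.
Proof.
move=> i; apply: ord_inj; rewrite pi_val piinv_val /piN.
have := ltn_ord i; have := ltn_ord j.
by case E1: (i < j)%N; case E2 : (nat_of_ord i == nat_of_ord j) => /=; repeat case: ifP => ?; lia.
Qed.

Lemma pi_small (i : 'I_n) : (i < j)%N -> pi i = i.
Proof. by move=> H; rewrite /pi H. Qed.

Definition tau (m : 'X_{1..n}) : 'X_{1..n} := [multinom m (pi i) | i < n].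
Definition tauinv (m : 'X_{1..n}) : 'X_{1..n} := [multinom m (piinv i) | i < n].

Lemma tauK : cancel tau tauinv.
Proof. by move=> m; apply/mnmP => i; rewrite !mnmE piinvK. Qed.
Lemma tauinvK : cancel tauinv tau.
Proof. by move=> m; apply/mnmP => i; rewrite !mnmE piK. Qed.
Lemma tau_inj : injective tau.
Proof. exact: can_inj tauK. Qed.

Lemma mdeg_tau m : mdeg (tau m) = mdeg m.
Proof.
rewrite !mdegE [RHS](reindex_inj (can_inj piK)) /=.
by apply: eq_bigr => i _; rewrite mnmE.
Qed.

Lemma mdeg_tauinv m : mdeg (tauinv m) = mdeg m.
Proof. by rewrite -{2}(tauinvK m) mdeg_tau. Qed.

Definition rot f : {mpoly R[n]} :=
  \sum_(m <- msupp f) (f@_m * qq ^+ m j) *: 'X_[tau m].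

Lemma rot_coef_tau f m : (rot f)@_(tau m) = f@_m * qq ^+ m j.
Proof.
rewrite coef_sumX; under eq_bigr do rewrite (inj_eq tau_inj).
exact: (sum_msupp_eq (fun m => qq ^+ m j)).
Qed.

Lemma rot_eq0 f : rot f = 0 -> f = 0.
Proof.
move=> H; apply: coef_of_eq0 => m; have := rot_coef_tau f m.
rewrite H mcoeff0 => /esym /eqP; rewrite mulf_eq0 expf_eq0 (negbTE qq_neq0) andbF orbF.
by move/eqP.
Qed.

Lemma rot_size f : (msize (rot f) <= msize f)%N.
Proof.
rewrite /rot big_seq; apply: msize_sum_le => m Hm; apply: msizeZX.
by rewrite mdeg_tau; apply: msize_mdeg_lt.
Qed.

Lemma rot_zbp f : zbp j f -> zbp j (rot f).
Proof.
move=> Hf mu Hmu; rewrite coef_sumX big_seq big1 // => m Hm.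
case: eqP => [E|]; last by rewrite mulr0.
have /zbP Hz := zbp_supp Hf Hm.
exfalso; move/negP: Hmu; apply; apply/zbP => i Hi.
by rewrite -E mnmE pi_small // Hz.
Qed.

Lemma rot_coef0 f mu : f@_(tauinv mu) = 0 -> (rot f)@_mu = 0.
Proof.
move=> H; rewrite coef_sumX big1 // => m _.
case: eqP => [E|]; last by rewrite mulr0.
by rewrite -E tauK in H; rewrite H !mul0r.
Qed.

Lemma rot_eval f (y : 'I_n -> R) :
  (rot f).@[y] = f.@[fun i => (if i == j then qq else 1) * y (piinv i)].
Proof.
rewrite [in RHS](mpolyE f) /rot !meval_sum; apply: eq_bigr => m _.
rewrite !mevalZ !mevalX -mulrA; congr (_ * _).
under [in RHS]eq_bigr do rewrite exprMn.
rewrite big_split /=; congr (_ * _).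
  rewrite (bigD1 j) //= eqxx big1 ?mulr1 // => i /negbTE ->.
  by rewrite expr1n.
rewrite [RHS](reindex_inj (can_inj piK)) /=.
by apply: eq_bigr => i _; rewrite mnmE piK.
Qed.

Lemma kk_rot (nu : 'X_{1..n}) : zb j nu -> (0 < nu j)%N ->
  forall i', kk (tau (nu - U_(j))%MM) i' = kk nu (pi i').
Proof.
move=> /zbP Hz Hj i'; rewrite !kk_sum [RHS](reindex_inj (can_inj piK)) /=.
apply: eq_bigr => l _.
have key := @F_nat j n' i' l (fun k => nu (inord k)).
rewrite /F' in key.
have Epi : forall x, nu (pi x) = (fun k => nu (inord k)) (piN j n' x).
  by move=> x; rewrite /= -pi_val inord_val.
have Eeq : forall x, (j == pi x) = (piN j n' x == j).
  by move=> x; rewrite eq_sym -val_eqE /= pi_val.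
rewrite !mnmE !Eeq !Epi !pi_val key //.
- by have := ltn_ord i'.
- by have := ltn_ord l.
- by have := ltn_ord j.
- move=> k Hk; apply: Hz; rewrite inordK //; have := ltn_ord j; lia.
- by rewrite inord_val.
Qed.

Lemma tilde_rot (nu : 'X_{1..n}) : zb j nu -> (0 < nu j)%N ->
  forall i, tilde nu i = (if i == j then qq else 1) * tilde (tau (nu - U_(j))%MM) (piinv i).
Proof.
move=> Hz Hj i; rewrite -{1 2}(piinvK i); move: (piinv i) => i'.
rewrite /tilde kk_rot // mnmE mnmBE mnm1E.
case: eqP => [E|ne].
  rewrite E eqxx mulrA -exprS; congr (_ ^+ _ * _); lia.
have -> : (j == pi i') = false by apply/negP => /eqP E; apply: ne; rewrite E.
by rewrite mul1r subn0.
Qed.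

End Step.

Definition Hyp (n k d : nat) (f : {mpoly Qqt[n]}) :=
  forall nu, zb k nu -> (mdeg nu <= d)%N ->
     f.@[tilde nu] = 0 \/ (mdeg nu = d /\ f@_nu = 0).

Definition Gprop (n k : nat) := forall d (f : {mpoly Qqt[n]}), (msize f <= d.+1)%N -> zbp k f ->
  Hyp k d f -> f = 0.

Definition cst n (j : 'I_n) : Qqt := tt_ ^- kk (0%MM : 'X_{1..n}) j.

Lemma step_rest n (j : 'I_n) d f : Gprop n j.+1 -> (msize f <= d.+1)%N -> zbp j f ->
  Hyp j d f -> rest j (cst j) f = 0.
Proof.
move=> IH Hs Hz H; apply: (IH d _ (leq_trans (rest_size j _ f) Hs) (rest_zbp _ Hz)).
rewrite /Hyp => nu Hnu0 Hd; move: (Hnu0) => /zbP Hnu.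
have Hnu' : zb j nu by apply/zbP => i Hi; apply: Hnu; lia.
have Htj : tilde nu j = cst j.
  rewrite /tilde /cst (kk_zero (mu := nu)) ?Hnu ?expr0 ?mul1r //.
case: (H nu Hnu' Hd) => [E|[E1 E2]].
  by left; rewrite rest_eval.
by right; split => //; rewrite (rest_coef_top _ Hs) // Hnu.
Qed.

Lemma tilde_j_neq n (j : 'I_n) (nu : 'X_{1..n}) : (0 < nu j)%N -> tilde nu j - cst j != 0.
Proof. by move=> H; rewrite subr_eq0 /tilde /cst qt_neq. Qed.

Lemma G_step n' (j : 'I_n'.+1) : Gprop n'.+1 j.+1 -> Gprop n'.+1 j.
Proof.
move=> IH d; elim: d => [|d IHd] f Hs Hz H;
  have Hr := step_rest IH Hs Hz H;
  have Hf : f = ('X_j - (cst j)%:MP) * quo j (cst j) f by rewrite {1}(rest_quo j (cst j) f) Hr add0r.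
  have /eqP : msize (quo j (cst j) f) = 0%N by apply/eqP; rewrite -leqn0 (quo_size _ _ Hs).
  by rewrite msize_poly_eq0 => /eqP E0; rewrite Hf E0 mulr0.
set g := quo j (cst j) f.
have Hgs : (msize g <= d.+1)%N by exact: quo_size _ _ Hs.
have Hgz : zbp j g by exact: quo_zbp.
suff : rot j g = 0 by move/rot_eq0 => E; rewrite Hf -/g E mulr0.
apply: (IHd (rot j g) (leq_trans (rot_size j g) Hgs) (rot_zbp Hgz)).
move=> mu /zbP Hmu Hd.
set nu := (tauinv j mu + U_(j))%MM.
have Hnuz : zb j nu.
  apply/zbP => i Hi; rewrite mnmDE mnmE mnm1E Hmu; last first.
    by rewrite -(pi_small Hi) piK.
  by have -> : (j == i) = false by apply/negP => /eqP E; move: Hi; rewrite E ltnn.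
have Hnuj : (0 < nu j)%N by rewrite mnmDE mnm1E eqxx addn1.
have Hmu' : tau j (nu - U_(j))%MM = mu by rewrite addmK tauinvK.
have Hdeg : mdeg nu = (mdeg mu).+1 by rewrite mdegD mdeg1 mdeg_tauinv addn1.
case: (H nu Hnuz); first by rewrite Hdeg.
  move=> E; left.
  have : (tilde nu j - cst j) * g.@[tilde nu] = 0.
    by rewrite -E [in RHS]Hf mevalM mevalB mevalXU mevalC.
  move/eqP; rewrite mulf_eq0 (negbTE (tilde_j_neq Hnuj)) /= => /eqP E2.
  rewrite rot_eval -E2; apply: meval_eq => i.
  by rewrite (tilde_rot Hnuz Hnuj) Hmu'.
move=> [E1 E2]; right; split; first by move: E1; rewrite Hdeg; lia.
apply: rot_coef0; move: (f_coef_quo Hr Hs E1 Hnuj).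
by rewrite E2 /nu addmK => ->.
Qed.

Lemma G_desc n' k : (k <= n'.+1)%N -> Gprop n'.+1 k.
Proof.
move Ei: (n'.+1 - k)%N => i; elim: i k Ei => [|i IH] k Ei Hk.
  have -> : k = n'.+1 by lia.
  move=> d f; exact: G_base.
have Hk' : (k < n'.+1)%N by lia.
have := @G_step n' (Ordinal Hk'); apply; apply: IH => /=; lia.
Qed.

Lemma Gprop0 n : Gprop n 0.
Proof. case: n => [|n']; [move=> d f; exact: G_base | exact: G_desc]. Qed.

Lemma G_all n d (f : {mpoly Qqt[n]}) : (msize f <= d.+1)%N ->
  (forall nu, (mdeg nu <= d)%N -> f.@[tilde nu] = 0 \/ (mdeg nu = d /\ f@_nu = 0)) -> f = 0.
Proof.
move=> Hs H; apply: (Gprop0 Hs).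
  by move=> m /negP []; apply/zbP => i; rewrite ltn0.
by move=> nu _; apply: H.
Qed.

Section Exist.
Variable n d : nat.
Local Notation T := ('X_{1..n < d.+1}).
Local Notation N := #|{: T}|.

Definition evmx : 'M[Qqt]_N :=
  \matrix_(i, k) ('X_[(enum_val i : T) : 'X_{1..n}] : {mpoly Qqt[n]}).@[tilde (enum_val k : T)].
Definition polyv (v : 'rV[Qqt]_N) : {mpoly Qqt[n]} :=
  \sum_(i < N) v 0 i *: 'X_[(enum_val i : T) : 'X_{1..n}].

Lemma polyv_size v : (msize (polyv v) <= d.+1)%N.
Proof. by apply: msize_sum_le => i _; apply: msizeZX; apply: bmdeg. Qed.

Lemma polyv_coef v k : (polyv v)@_(enum_val k : T) = v 0 k.
Proof.
rewrite /polyv coef_sumX (bigD1 k) //= eqxx mulr1 big1 ?addr0 // => i ne.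
suff -> : ((enum_val i : T) : 'X_{1..n}) == (enum_val k : T) = false by rewrite mulr0.
apply/negP => /eqP /val_inj /enum_val_inj E; by rewrite E eqxx in ne.
Qed.

Lemma polyv_eval v k : (polyv v).@[tilde (enum_val k : T)] = (v *m evmx) 0 k.
Proof.
rewrite /polyv meval_sum !mxE; apply: eq_bigr => i _.
by rewrite mevalZ mxE.
Qed.

Lemma polyv_eval_nu v (nu : 'X_{1..n}) (H : (mdeg nu < d.+1)%N) :
  (polyv v).@[tilde nu] = (v *m evmx) 0 (enum_rank (BMultinom H)).
Proof. by rewrite -polyv_eval enum_rankK. Qed.

Lemma evmx_unit : evmx \in unitmx.
Proof.
rewrite unitmxE unitfE; apply/negP => /det0P [v vnz Hv].
have p0 : polyv v = 0.
  apply: (G_all (polyv_size v)) => nu Hnu; left.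
  have H : (mdeg nu < d.+1)%N by [].
  by rewrite (polyv_eval_nu v H) Hv mxE.
move/eqP: vnz; apply; apply/rowP => i; rewrite !mxE -polyv_coef p0.
exact: mcoeff0.
Qed.

Lemma exists_E (mu : 'X_{1..n}) : mdeg mu = d -> exists f, is_Estar mu f.
Proof.
move=> Hmu.
pose e : 'rV[Qqt]_N := \row_k ((((enum_val k : T) : 'X_{1..n}) == mu)%:R).
pose p := polyv (e *m invmx evmx).
have Hev : forall nu, (mdeg nu <= d)%N -> p.@[tilde nu] = (nu == mu)%:R.
  move=> nu Hnu; have H : (mdeg nu < d.+1)%N by [].
  by rewrite /p (polyv_eval_nu _ H) mulmxKV ?evmx_unit // mxE enum_rankK.
have Hmu' : (mdeg mu <= d)%N by rewrite Hmu.
have pmu : p@_mu != 0.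
  apply/negP => /eqP pm0.
  have p0 : p = 0.
    apply: (G_all (polyv_size _)) => nu Hnu.
    case: (eqVneq nu mu) => [->|ne]; first by right.
    by left; rewrite Hev // (negbTE ne).
  by move: (Hev mu Hmu'); rewrite p0 meval0 eqxx => /esym/eqP; rewrite oner_eq0.
exists ((p@_mu)^-1 *: p); split; last split.
- by rewrite /degle /wt Hmu; apply: leq_trans (msizeZ_le _ _) (polyv_size _).
- by rewrite mcoeffZ mulVf.
move=> nu Hnu ne; rewrite mevalZ Hev; last by rewrite -Hmu.
by move/eqP/negbTE: ne => ->; rewrite mulr0.
Qed.
End Exist.

Lemma Estar_spec n (mu : 'X_{1..n}) : is_Estar mu (Estar mu).
Proof. by rewrite /Estar; apply: epsilon_spec; apply: (exists_E (d := mdeg mu)). Qed.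

Lemma Estar_at n (mu : 'X_{1..n}) : (Estar mu).@[tilde mu] != 0.
Proof.
have [H1 [H2 H3]] := Estar_spec mu.
apply/negP => /eqP E0.
have : Estar mu = 0.
  apply: (G_all (d := mdeg mu) H1) => nu Hnu; left.
  case: (eqVneq nu mu) => [->|ne] //; apply: H3 => //; exact/eqP.
by move=> E; move: H2; rewrite E mcoeff0 => /esym/eqP; rewrite oner_eq0.
Qed.

Lemma wt_permm n (lam : 'X_{1..n}) s : wt (permm lam s) = wt lam.
Proof. exact: mdeg_mperm. Qed.

Lemma Estar_permm_size n (lam : 'X_{1..n}) s : (msize (Estar (permm lam s)) <= (wt lam).+1)%N.
Proof. by have [H _] := Estar_spec (permm lam s); move: H; rewrite /degle wt_permm. Qed.

Lemma rearr_permm n (lam nu : 'X_{1..n}) : rearr lam nu <-> exists s, permm lam s = nu.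
Proof.
split=> [[s Hs]|[s <-]]; exists s.
  by apply/mnmP => i; rewrite mnmE Hs.
by move=> i; rewrite mnmE.
Qed.

Unset Implicit Arguments.

Theorem lemma2p5 (n : nat) (lam : 'X_{1..n}) :
  is_partition lam ->
  forall f : {mpoly Qqt[n]},
    Vstar lam f <->
    exists c : 'S_n -> Qqt, f = \sum_(s : 'S_n) c s *: Estar (permm lam s).
Proof.
move=> _ f; split; last first.
  move=> [c ->]; split.
    rewrite /degle; apply: msize_sum_le => s _.
    exact: leq_trans (msizeZ_le _ _) (Estar_permm_size _ _).
  move=> nu Hnu Hr; rewrite meval_sum big1 // => s _; rewrite mevalZ.
  have [_ [_ H3]] := Estar_spec (permm lam s).
  rewrite H3 ?mulr0 ?wt_permm //.
  by move=> E; apply: Hr; apply/rearr_permm; exists s.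
move=> [Hdeg Hv].
pose rep (s : 'S_n) := odflt 1%g [pick s' | permm lam s' == permm lam s].
have rep_spec : forall s, permm lam (rep s) = permm lam s.
  move=> s; rewrite /rep; case: pickP => [s' /eqP //|H].
  by have := H s; rewrite eqxx.
have rep_eq : forall s1 s2, permm lam s1 = permm lam s2 -> rep s1 = rep s2.
  by move=> s1 s2 E; rewrite /rep; congr odflt; apply: eq_pick => s'; rewrite E.
pose c (s : 'S_n) := if rep s == s then
   f.@[tilde (permm lam s)] / (Estar (permm lam s)).@[tilde (permm lam s)] else 0.
exists c.
apply/eqP; rewrite -subr_eq0; apply/eqP.
apply: (G_all (d := wt lam)).
  apply: leq_trans (msizeD_le _ _) _; rewrite geq_max Hdeg msizeN /=.
  apply: msize_sum_le => s _.
  exact: leq_trans (msizeZ_le _ _) (Estar_permm_size _ _).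
move=> nu Hnu; left; rewrite mevalB meval_sum.
case: (boolP [exists s : 'S_n, permm lam s == nu]) => [/existsP [s0 /eqP Hs0]|Hne].
  set s1 := rep s0.
  have Hs1 : permm lam s1 = nu by rewrite rep_spec.
  have Hrep1 : rep s1 = s1 by apply: rep_eq; rewrite Hs1.
  rewrite (bigD1 s1) //= big1 ?addr0.
    rewrite mevalZ /c Hrep1 eqxx Hs1 divfK ?subrr //; rewrite -Hs1; exact: Estar_at.
  move=> s ne; rewrite mevalZ /c; case: eqP => [Hrs|]; last by rewrite mul0r.
  have [_ [_ H3]] := Estar_spec (permm lam s).
  rewrite (H3 nu) ?mulr0 ?wt_permm //.
  by move=> E; move: ne; rewrite -Hrs /s1 (rep_eq s s0) ?eqxx // Hs0 E.
rewrite Hv ?sub0r ?big1 ?oppr0 //.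
  move=> s _; rewrite mevalZ.
  have [_ [_ H3]] := Estar_spec (permm lam s).
  rewrite (H3 nu) ?mulr0 ?wt_permm //.
  by move=> E; move/existsP: Hne; apply; exists s; rewrite E.
by move/rearr_permm => [s E]; move/existsP: Hne; apply; exists s; rewrite E.
Qed.
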